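(* Let $f:\mathbb{R}\to\mathbb{R}$ be given by $f(t):=\sum_{n=1}^\infty\frac1n\sin^2(t/2^n)$. Then $f$ is not quasi-asymptotically almost periodic; that is, it is false that for every $\epsilon>0$ there is $l>0$ such that every interval of length $l$ contains a number $\tau$ for which there exists $M(\epsilon,\tau)>0$ with $|f(t+\tau)-f(t)|\le\epsilon$ for all $|t|\ge M(\epsilon,\tau)$.
   Context: Known facts (may be used): $f$ is well defined, uniformly continuous, unbounded, and for each $\tau\in\mathbb{R}$ the function $t\mapsto f(t+\tau)-f(t)$ is (Bohr) almost periodic. *)

(* Defs.v *)
From Stdlib Require Import Reals.
From Coquelicot Require Import Coquelicot.
Open Scope R_scope.

(* f(t) = sum_{n>=1} (1/n) sin^2(t/2^n); reindexed with k = n-1 >= 0. *)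
Definition f_ex (t : R) : R :=
  Series (fun k : nat => / INR (S k) * (sin (t / 2 ^ (S k))) ^ 2).

Definition quasi_asymptotically_almost_periodic (g : R -> R) : Prop :=
  forall eps : R, eps > 0 ->
  exists l : R, l > 0 /\
    forall a : R, exists tau : R, a <= tau <= a + l /\
      exists M : R, M > 0 /\
        forall t : R, Rabs t >= M -> Rabs (g (t + tau) - g t) <= eps.

(* Main.v *)
Require Import Defs.
From Stdlib Require Import Reals Lra Lia.
From Coquelicot Require Import Coquelicot.
Open Scope R_scope.

Lemma abs_sin_pos y : 0 < y -> Rabs (sin y) <= y.
Proof.
  intros Hy. pose proof (sin_lt_x y Hy). pose proof (SIN_bound y).
  destruct (Rle_lt_dec 1 y).
  - apply Rabs_le; lra.
  - assert (0 <= sin y) by (apply sin_ge_0; pose proof PI2_1; pose proof PI2_Rlt_PI; lra).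
    rewrite Rabs_right; lra.
Qed.

Lemma abs_sin_le y : Rabs (sin y) <= Rabs y.
Proof.
  destruct (Rtotal_order y 0) as [H|[H|H]].
  - rewrite <- (Ropp_involutive y), sin_neg, !Rabs_Ropp.
    rewrite (Rabs_left y) by lra. apply abs_sin_pos; lra.
  - subst. rewrite sin_0. lra.
  - rewrite (Rabs_right y) by lra. now apply abs_sin_pos.
Qed.

Lemma sin_sq_diff u v : sin u ^ 2 - sin v ^ 2 = sin (u + v) * sin (u - v).
Proof.
  rewrite sin_plus, sin_minus.
  pose proof (sin2_cos2 u). pose proof (sin2_cos2 v). unfold Rsqr in *. nra.
Qed.

Lemma sin_INR_PI m : sin (INR m * PI) = 0.
Proof.
  induction m. - simpl. rewrite Rmult_0_l. apply sin_0.
  - rewrite S_INR. replace ((INR m + 1) * PI) with (INR m * PI + PI) by ring.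
    rewrite neg_sin, IHm. ring.
Qed.

Lemma sin2_3 m : sin (2 ^ m * PI / 3) ^ 2 = 3 / 4.
Proof.
  induction m.
  - rewrite pow_O. replace (1 * PI / 3) with (PI / 3) by field. rewrite sin_PI3.
    replace ((sqrt 3 / 2) ^ 2) with ((sqrt 3 * sqrt 3) / 4) by field.
    rewrite sqrt_sqrt by lra. lra.
  - replace (2 ^ S m * PI / 3) with (2 * (2 ^ m * PI / 3)) by (simpl; field).
    rewrite sin_2a. pose proof (sin2_cos2 (2 ^ m * PI / 3)). unfold Rsqr in *.
    set (s := sin _) in *. set (c := cos _) in *.
    replace ((2 * s * c) ^ 2) with (4 * (s^2) * (c * c)) by ring.
    rewrite IHm. simpl in IHm. nra.
Qed.
Lemma sq_sin_le y : sin y ^ 2 <= y ^ 2.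
Proof.
  rewrite <- (pow2_abs (sin y)), <- (pow2_abs y).
  apply pow_incr. split; [apply Rabs_pos | apply abs_sin_le].
Qed.

Lemma Series_zero : Series (fun _ => 0) = 0.
Proof.
  rewrite (Series_ext _ (fun n : nat => 0 * 1)) by (intros; ring).
  rewrite Series_scal_l. ring.
Qed.

Lemma Series_nonneg a : (forall n, 0 <= a n) -> ex_series a -> 0 <= Series a.
Proof.
  intros H He. rewrite <- Series_zero. apply Series_le; auto. intros; split; [lra|auto].
Qed.

Lemma ex_geom_c c : ex_series (fun k => c * (/2) ^ k).
Proof.
  apply (ex_series_scal_l c (fun k => (/2)^k)).
  exists (/ (1 - /2)). apply is_series_geom. rewrite Rabs_right; lra.
Qed.

Lemma Series_geom_c c : Series (fun k => c * (/2) ^ k) = 2 * c.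
Proof.
  rewrite Series_scal_l, Series_geom by (rewrite Rabs_right; lra). field.
Qed.

Lemma inv_S_bound k : 0 < / INR (S k) <= 1.
Proof.
  pose proof (pos_INR k). rewrite S_INR. split.
  - apply Rinv_0_lt_compat; lra.
  - rewrite <- Rinv_1. apply Rinv_le_contravar; lra.
Qed.

Lemma half_pow_pos k : 0 < (/2) ^ k <= 1.
Proof.
  split. apply pow_lt; lra. rewrite <- (pow1 k). apply pow_incr; lra.
Qed.

Lemma div_pow2 x k : x / 2 ^ S k = x * ((/2) ^ k / 2).
Proof.
  rewrite pow_inv. simpl. field. apply pow_nonzero; lra.
Qed.

Definition T (x : R) (k : nat) : R := / INR (S k) * (sin (x / 2 ^ (S k))) ^ 2.

Lemma T_bound x k : 0 <= T x k <= x ^ 2 * (/2) ^ k.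
Proof.
  unfold T. pose proof (inv_S_bound k). pose proof (half_pow_pos k).
  pose proof (sq_sin_le (x / 2 ^ S k)). rewrite div_pow2 in *.
  set (q := (/2)^k) in *. set (s := sin _ ^ 2) in *.
  assert (0 <= s) by (unfold s; apply pow2_ge_0).
  assert ((x * (q / 2)) ^ 2 <= x ^ 2 * q).
  { assert (0 <= x^2) by apply pow2_ge_0.
    replace ((x * (q / 2)) ^ 2) with (x^2 * (q * q / 4)) by field. 
    apply Rmult_le_compat_l; nra. }
  split; [nra|]. 
  apply Rle_trans with s; [|lra]. rewrite <- (Rmult_1_l s) at 2.
  apply Rmult_le_compat_r; lra.
Qed.

Lemma ex_T x : ex_series (T x).
Proof.
  apply (ex_series_le (T x) (fun k => x ^ 2 * (/2) ^ k)); [|apply ex_geom_c].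
  intros n. pose proof (T_bound x n). unfold norm; simpl; unfold abs; simpl.
  rewrite Rabs_right; lra.
Qed.

Lemma f_bounds x : 0 <= f_ex x <= 2 * x ^ 2.
Proof.
  unfold f_ex. fold (T x). split.
  - apply Series_nonneg; [intros; apply T_bound | apply ex_T].
  - rewrite <- Series_geom_c. apply Series_le; [intros; apply T_bound|apply ex_geom_c].
Qed.
Lemma ln_1p y : 0 < y -> ln (1 + y) < y.
Proof.
  intros Hy. rewrite <- (ln_exp y) at 2. apply ln_increasing; [lra|].
  apply exp_ineq1; lra.
Qed.

Lemma harm n : ln (INR n + 2) <= sum_f_R0 (fun k => / INR (S k)) n.
Proof.
  induction n.
  - simpl. replace (0 + 2) with (1 + 1) by ring. pose proof (ln_1p 1). lra.
  - rewrite tech5. pose proof (pos_INR n).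
    replace (INR (S n) + 2) with ((INR n + 2) * (1 + / (INR n + 2)))
      by (rewrite S_INR; field; lra).
    assert (0 < / (INR n + 2)) by (apply Rinv_0_lt_compat; lra).
    rewrite ln_mult by lra.
    pose proof (ln_1p (/ (INR n + 2))).
    replace (INR (S (S n))) with (INR n + 2) by (rewrite !S_INR; ring). lra.
Qed.

Lemma f_at n : 3 / 4 * sum_f_R0 (fun k => / INR (S k)) n <= f_ex (2 ^ S n * PI / 3).
Proof.
  unfold f_ex. set (x := 2 ^ S n * PI / 3). fold (T x).
  rewrite (Series_incr_n (T x) (S n)) by (lia || apply ex_T). simpl Init.Nat.pred.
  assert (0 <= Series (fun k => T x (S n + k)%nat)).
  { apply Series_nonneg. intros; apply T_bound.
    apply (ex_series_incr_n (T x) (S n)). apply ex_T. }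
  rewrite scal_sum.
  rewrite (sum_eq _ (T x)). lra.
  intros i Hi. unfold T. f_equal.
  unfold x. replace (S n) with (S i + (n - i))%nat by lia. rewrite pow_add.
  replace (2 ^ S i * 2 ^ (n - i) * PI / 3 / 2 ^ S i) with (2 ^ (n - i) * PI / 3)
    by (field; apply pow_nonzero; lra).
  now rewrite sin2_3.
Qed.

Lemma f_large B : exists x, f_ex x > B.
Proof.
  destruct (INR_unbounded (exp (4 / 3 * B))) as [n Hn].
  exists (2 ^ S n * PI / 3). pose proof (f_at n). pose proof (harm n).
  assert (4/3*B < ln (INR n + 2)).
  { rewrite <- (ln_exp (4/3*B)) at 1. apply ln_increasing. apply exp_pos. lra. }
  lra.
Qed.
Lemma d_bound x P k : Rabs (T (x + P) k - T x k) <= Rabs (sin (P / 2 ^ S k)).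
Proof.
  unfold T. rewrite <- Rmult_minus_distr_l, sin_sq_diff, !Rabs_mult.
  replace ((x + P) / 2 ^ S k - x / 2 ^ S k) with (P / 2 ^ S k)
    by (field; apply pow_nonzero; lra).
  pose proof (inv_S_bound k). pose proof (SIN_bound ((x + P) / 2 ^ S k + x / 2 ^ S k)).
  set (a := sin (_ + _)) in *. set (b := Rabs (sin (P / 2 ^ S k))).
  assert (0 <= b) by apply Rabs_pos.
  assert (Rabs a <= 1) by (apply Rabs_le; lra).
  rewrite (Rabs_right (/ INR (S k))) by lra.
  assert (0 <= Rabs a) by apply Rabs_pos.
  assert (/ INR (S k) * Rabs a <= 1) by nra. nra.
Qed.

Lemma tail_bound x N k :
  Rabs (T (x + 2 ^ N * PI) (N + k) - T x (N + k)) <= PI / 2 * (/ 2) ^ k.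
Proof.
  eapply Rle_trans; [apply d_bound|].
  replace (2 ^ N * PI / 2 ^ S (N + k)) with (PI * ((/2) ^ k / 2)).
  - eapply Rle_trans; [apply abs_sin_le|]. pose proof (half_pow_pos k).
    pose proof PI_RGT_0. rewrite Rabs_right; nra.
  - replace (S (N + k)) with (N + S k)%nat by lia. rewrite pow_add, pow_inv.
    simpl. field. split; apply pow_nonzero; lra.
Qed.

Lemma f_shift x N : Rabs (f_ex (x + 2 ^ N * PI) - f_ex x) <= PI.
Proof.
  unfold f_ex. fold (T (x + 2 ^ N * PI)). fold (T x).
  rewrite <- Series_minus by apply ex_T.
  rewrite (Series_incr_n_aux _ N).
  - eapply Rle_trans; [apply Series_Rabs|].
    + apply (ex_series_le (fun n => Rabs (T (x + 2 ^ N * PI) (N + n) - T x (N + n)))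
         (fun k => PI / 2 * (/ 2) ^ k)); [|apply ex_geom_c].
      intros n. unfold norm; simpl; unfold abs; simpl. rewrite Rabs_Rabsolu.
      apply tail_bound.
    + apply Rle_trans with (2 * (PI / 2)); [|lra]. rewrite <- Series_geom_c.
      apply Series_le; [|apply ex_geom_c]. intros n; split; [apply Rabs_pos|apply tail_bound].
  - intros k Hk. pose proof (d_bound x (2 ^ N * PI) k).
    assert (Hs : sin (2 ^ N * PI / 2 ^ S k) = 0).
    { replace N with (S k + (N - S k))%nat by lia. rewrite pow_add.
      replace (2 ^ S k * 2 ^ (N - S k) * PI / 2 ^ S k) with (INR (2 ^ (N - S k)) * PI)
        by (rewrite pow_INR; replace (INR 2) with 2 by (simpl; ring); field; apply pow_nonzero; lra).
      apply sin_INR_PI. }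
    rewrite Hs, Rabs_R0 in H.
    pose proof (Rabs_pos (T (x + 2 ^ N * PI) k - T x k)).
    assert (Rabs (T (x + 2 ^ N * PI) k - T x k) = 0) by lra.
    apply Rabs_eq_0 in H1. exact H1.
Qed.
Lemma INR_le_pow2 N : INR N <= 2 ^ N.
Proof.
  induction N. simpl; lra. rewrite S_INR. simpl.
  pose proof (pow_le 2 N ltac:(lra)). pose proof (pow_R1_Rle 2 N ltac:(lra)). lra.
Qed.

Theorem mainTheorem5 : ~ quasi_asymptotically_almost_periodic f_ex.
Proof.
  intros H. destruct (H 1 ltac:(lra)) as [l [Hl Hd]].
  destruct (f_large (2 * l ^ 2 + 2 * PI + 1)) as [s Hs].
  destruct (Hd (- s)) as [tau [Htau [M [HM Ht]]]].
  destruct (INR_unbounded (M + Rabs s)) as [N HN].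
  pose proof (INR_le_pow2 N). pose proof PI2_1. pose proof (pow_le 2 N ltac:(lra)).
  assert (HP : 2 ^ N <= 2 ^ N * PI) by nra.
  specialize (Ht (s + 2 ^ N * PI)).
  assert (HA : Rabs (s + 2 ^ N * PI) >= M).
  { pose proof (Rabs_triang_inv (2 ^ N * PI) (- s)) as Hq. rewrite Rabs_Ropp in Hq.
    replace (2 ^ N * PI - - s) with (s + 2 ^ N * PI) in Hq by ring.
    rewrite (Rabs_right (2 ^ N * PI)) in Hq by lra. lra. }
  specialize (Ht HA).
  replace (s + 2 ^ N * PI + tau) with ((s + tau) + 2 ^ N * PI) in Ht by ring.
  pose proof (f_shift (s + tau) N) as A1. pose proof (f_shift s N) as A2.
  pose proof (f_bounds (s + tau)).
  assert ((s + tau) ^ 2 <= l ^ 2) by (apply pow_incr; lra).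
  apply Rabs_le_between in Ht. apply Rabs_le_between in A1. apply Rabs_le_between in A2.
  lra.
Qed.
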